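(* Let $\mathcal N=(\mathcal L,\mathcal I,D_{\mathcal L})$ be a network and let $R\in\mathcal R^{\mathcal N}$. Then for every $\epsilon>0$ there exists a collision-free schedule $S$ that has some period $T_p\ge 1$, whose rate vector $R_S$ exists, and which satisfies $R_S\succcurlyeq R-\epsilon$.
   Context: A network is a triple $\mathcal N=(\mathcal L,\mathcal I,D_{\mathcal L})$ where $\mathcal L$ is a finite nonempty set (of links); $\mathcal I=(\mathcal I(l))_{l\in\mathcal L}$ is the collision profile, each $\mathcal I(l)$ being a collection of nonempty subsets of $\mathcal L$; and $D_{\mathcal L}$ (the link-wise delay matrix) assigns an integer $D_{\mathcal L}(l,l')$ to every pair $(l,l')$ with $l'\in\phi$ for some $\phi\in\mathcal I(l)$. The character of $\mathcal N$ is $D^*=\max_{l\in\mathcal L}\max_{\phi\in\mathcal I(l)}\max_{l'\in\phi}|D_{\mathcal L}(l,l')|$ (taken to be $0$ if there are no collision sets). A schedule is a map $S:\mathcal L\times\mathbb Z\to\{0,1\}$. For $(l,t)\in\mathcal L\times\mathbb Z$, $S(l,t)$ has a collision if there exists $\phi\in\mathcal I(l)$ such that $S(l',t+D_{\mathcal L}(l,l'))=1$ for every $l'\in\phi$; otherwise $S(l,t)$ is collision free. $S$ is collision free if $S(l,t)$ is collision free for every $(l,t)$ with $S(l,t)=1$. $S$ has period $T_p\ge 1$ if $S(l,t)=S(l,t+T_p)$ for all $(l,t)$. For a schedule $S$ and link $l$, $R_S(l)=\lim_{T\to\infty}\frac1T\sum_{t=0}^{T-1}\iota\big(S(l,t)=1\text{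 and }S(l,t)\text{ is collision free}\big)$ when the limit exists ($\iota$ is the indicator); if it exists for all $l$, $R_S=(R_S(l))_{l\in\mathcal L}$ is the rate vector of $S$. Vectors/matrices are compared entrywise ($A\preccurlyeq B$ iff each entry of $A$ is at most the corresponding entry of $B$), and $R-\epsilon$ means subtracting $\epsilon$ from every entry. A nonnegative vector $R\in[0,\infty)^{\mathcal L}$ is achievable if for every $\epsilon>0$ there is a schedule $S$ whose rate vector exists and satisfies $R_S\succcurlyeq R-\epsilon$; the rate region $\mathcal R^{\mathcal N}$ is the set of all achievable nonnegative vectors. *)

(* Defs.v *)
From mathcomp Require Import ssreflect ssrbool eqtype fintype finset.
From Stdlib Require Import ZArith Reals.

Set Implicit Arguments.
Unset Strict Implicit.
Unset Printing Implicit Defensive.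

(* A network over the finite link type L:
   - I : L -> {set {set L}} is the collision profile (I l = collection of collision sets of l),
   - D : L -> L -> Z is the link-wise delay matrix (only its values D l l' with
     l' in some phi \in I l are ever used). *)

Definition network_wf (L : finType) (I : L -> {set {set L}}) : Prop :=
  (0 < #|L|)%nat /\ (forall (l : L) (phi : {set L}), phi \in I l -> phi != set0).

Definition schedule (L : finType) := L -> Z -> bool.

Definition has_collision (L : finType) (I : L -> {set {set L}}) (D : L -> L -> Z)
    (S : schedule L) (l : L) (t : Z) : bool :=
  [exists phi in I l, [forall l' in phi, S l' (t + D l l')%Z]].

Definition collision_free (L : finType) (I : L -> {set {set L}}) (D : L -> L -> Z)
    (S : schedule L) : Prop :=
  forall (l : L) (t : Z), S l t = true -> has_collision I D S l t = false.

Definition has_period (L : finType) (S : schedule L) (Tp : nat) : Prop :=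
  (1 <= Tp)%nat /\ forall (l : L) (t : Z), S l t = S l (t + Z.of_nat Tp)%Z.

Fixpoint success_count (L : finType) (I : L -> {set {set L}}) (D : L -> L -> Z)
    (Sch : schedule L) (l : L) (T : nat) : nat :=
  match T with
  | O => O
  | Datatypes.S n => (success_count I D Sch l n +
             (if Sch l (Z.of_nat n) && ~~ has_collision I D Sch l (Z.of_nat n) then 1 else 0))%nat
  end.

(* (1/T) * sum_{t=0}^{T-1} indicator; the T = 0 term is irrelevant for the limit. *)
Definition avg_rate (L : finType) (I : L -> {set {set L}}) (D : L -> L -> Z)
    (S : schedule L) (l : L) (T : nat) : R :=
  (INR (success_count I D S l T) / INR T)%R.

Definition is_rate_vector (L : finType) (I : L -> {set {set L}}) (D : L -> L -> Z)
    (S : schedule L) (r : L -> R) : Prop :=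
  forall l : L, Un_cv (avg_rate I D S l) (r l).

Definition achievable (L : finType) (I : L -> {set {set L}}) (D : L -> L -> Z)
    (Rv : L -> R) : Prop :=
  forall eps : R, (0 < eps)%R ->
    exists (S : schedule L) (r : L -> R),
      is_rate_vector I D S r /\ forall l : L, (Rv l - eps <= r l)%R.

Definition in_rate_region (L : finType) (I : L -> {set {set L}}) (D : L -> L -> Z)
    (Rv : L -> R) : Prop :=
  (forall l : L, (0 <= Rv l)%R) /\ achievable I D Rv.

(* Main.v *)
Require Import Defs.
From mathcomp Require Import ssreflect ssrbool ssrfun eqtype ssrnat seq div fintype finset bigop.
From mathcomp Require Import zify.
From Stdlib Require Import ZArith Reals Lra Lia Psatz.

Fixpoint cnt (f : nat -> bool) (n : nat) : nat :=
  match n with O => O | Datatypes.S n => (cnt f n + (if f n then 1 else 0))%nat end.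

Lemma cnt_le f n : (cnt f n <= n)%nat.
Proof. elim: n => //= n IH; case: (f n); lia. Qed.

Lemma cnt_ext f g n : (forall t, (t < n)%nat -> f t = g t) -> cnt f n = cnt g n.
Proof.
elim: n => //= n IH H; rewrite IH ?H //; move=> t Ht; apply: H; lia.
Qed.

Lemma cnt_false n : cnt (fun _ => false) n = 0%nat.
Proof. elim: n => //= n ->. done. Qed.

Lemma cnt_add f a b : cnt f (a + b) = (cnt f a + cnt (fun t => f (a + t)%nat) b)%nat.
Proof. elim: b => [|b IH]; first by rewrite addn0 /= addn0.
rewrite addnS /= IH; lia. Qed.

Lemma cnt_per f p : (forall t, f (t + p)%nat = f t) -> forall q m,
  cnt f (q * p + m) = (q * cnt f p + cnt f m)%nat.
Proof.
move=> Hp; elim => [|q IH] m; first by rewrite /=.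
rewrite mulSn -addnA cnt_add.
rewrite (@cnt_ext (fun t => f (p + t)%nat) f); last by move=> t _; rewrite addnC Hp.
rewrite IH; lia.
Qed.

Lemma cnt_cv f p : (0 < p)%nat -> (forall t, f (t + p)%nat = f t) ->
  Un_cv (fun n => INR (cnt f n) / INR n)%R (INR (cnt f p) / INR p)%R.
Proof.
move=> Hp0 Hp e He.
have Hpr : (0 < INR p)%R by apply: lt_0_INR; apply/ltP.
have [N [HN HN0]] := archimed_cor1 (e / INR p) ltac:(apply: Rdiv_lt_0_compat; lra).
exists N => n Hn.
have HNr : (0 < INR N)%R by apply: lt_0_INR.
have HnN : (INR N <= INR n)%R by apply: le_INR; lia.
have HpN : (INR p < e * INR N)%R.
  have E : (e * INR N - INR p = (e / INR p - / INR N) * (INR N * INR p))%R by field; lra.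
  have : (0 < (e / INR p - / INR N) * (INR N * INR p))%R.
    apply: Rmult_lt_0_compat; nra.
  lra.
pose q := (n %/ p)%nat. pose m := (n %% p)%nat.
have Hn' : n = (q * p + m)%nat by rewrite /q /m -divn_eq.
have Hm : (m < p)%nat by rewrite /m ltn_mod.
have Hc := @cnt_per f p Hp q m.
rewrite -Hn' in Hc.
have Hcm := cnt_le f m. have Hcp := cnt_le f p.
set a := cnt f n in Hc *. set c := cnt f p in Hc Hcp *. set em := cnt f m in Hc Hcm.
have E1 : (a * p = q * c * p + em * p)%nat by rewrite Hc mulnDl.
have E2 : (n * c = q * p * c + m * c)%nat by rewrite {1}Hn' mulnDl.
have F1 : (em * p <= p * p)%nat by apply: leq_mul; lia.
have F2 : (m * c <= p * p)%nat by apply: leq_mul; lia.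
have B1 : (a * p <= n * c + p * p)%nat.
  rewrite E1 E2 (mulnAC q p c). lia.
have B2 : (n * c <= a * p + p * p)%nat.
  rewrite E1 E2 (mulnAC q p c). lia.
have R1 : (INR a * INR p <= INR n * INR c + INR p * INR p)%R.
  rewrite -!mult_INR -plus_INR; apply: le_INR; lia.
have R2 : (INR n * INR c <= INR a * INR p + INR p * INR p)%R.
  rewrite -!mult_INR -plus_INR; apply: le_INR; lia.
have Hnr : (0 < INR n)%R by lra.
rewrite /R_dist.
have -> : (INR a / INR n - INR c / INR p = (INR a * INR p - INR n * INR c) * / (INR n * INR p))%R.
  field; split; apply: Rgt_not_eq; lra.
have Hu : (0 < / (INR n * INR p))%R by apply: Rinv_0_lt_compat; nra.
have Hk : (INR p * INR p < e * (INR n * INR p))%R.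
  have : (e * INR N * INR p <= e * INR n * INR p)%R by apply: Rmult_le_compat_r; [lra | apply: Rmult_le_compat_l; lra].
  have : (INR p * INR p < e * INR N * INR p)%R by apply: Rmult_lt_compat_r; lra.
  lra.
have Hinv : (e * (INR n * INR p) * / (INR n * INR p) = e)%R by rewrite Rmult_assoc Rinv_r; [lra | apply: Rgt_not_eq; nra].
apply: Rabs_def1; nra.
Qed.
Lemma mod_shift (Zp T K t d : Z) : Zp = (T + K)%Z -> (0 < Zp)%Z -> (0 <= K)%Z ->
  (t mod Zp < T)%Z -> ((t+d) mod Zp < T)%Z -> (Z.abs d <= K)%Z ->
  ((t + d) mod Zp = t mod Zp + d)%Z.
Proof.
move=> HZ Hp HK H1 H2 Hd.
have E1 := Z.div_mod t Zp ltac:(lia).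
have E2 := Z.div_mod (t+d) Zp ltac:(lia).
have B1 := Z.mod_pos_bound t Zp Hp.
have B2 := Z.mod_pos_bound (t+d) Zp Hp.
set s1 := (t mod Zp)%Z in E1 B1 H1 *.
set s2 := ((t+d) mod Zp)%Z in E2 B2 H2 *.
set q1 := (t / Zp)%Z in E1.
set q2 := ((t+d) / Zp)%Z in E2.
have : (Zp * (q2 - q1) = s1 - s2 + d)%Z by lia.
move=> E.
have : (q2 - q1 = 0)%Z by nia.
nia.
Qed.

Lemma unif (L : finType) (P : L -> nat -> Prop) :
  (forall l, exists N, forall n, (n >= N)%coq_nat -> P l n) ->
  exists N, forall l n, (n >= N)%coq_nat -> P l n.
Proof.
move=> H.
suff: forall s : seq L, exists N, forall l, l \in s -> forall n, (n >= N)%coq_nat -> P l n.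
  move=> /(_ (enum L)) [N HN]; exists N => l n Hn; apply: HN => //; by rewrite mem_enum.
elim => [|x s [N HN]]; first by exists 0%nat.
have [Nx Hx] := H x. exists (N + Nx)%nat.
move=> l; rewrite inE => /orP [/eqP -> | Hl] n Hn; [apply: Hx | apply: HN] => //; lia.
Qed.

Lemma sc_cnt (L : finType) (I : L -> {set {set L}}) (D : L -> L -> Z) (Sch : schedule L) l n :
  success_count I D Sch l n =
  cnt (fun t => Sch l (Z.of_nat t) && ~~ has_collision I D Sch l (Z.of_nat t)) n.
Proof. elim: n => //= n ->. done. Qed.

Theorem theorem1 (L : finType) (I : L -> {set {set L}}) (D : L -> L -> Z)
    (Hwf : network_wf I) (Rv : L -> R) (HR : in_rate_region I D Rv) :
  forall eps : R, (0 < eps)%R ->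
    exists (S : schedule L) (Tp : nat) (r : L -> R),
      collision_free I D S /\ has_period S Tp /\
      is_rate_vector I D S r /\ (forall l : L, (Rv l - eps <= r l)%R).
Proof.
move=> eps Heps.
case: HR => _ Hach.
have [S0 [r0 [Hr0 Hle0]]] := Hach (eps / 2)%R ltac:(lra).
have [N HN] := @unif L (fun l n => (r0 l - eps / 4 <= avg_rate I D S0 l n)%R)
  ltac:(move=> l; have [N HN] := Hr0 l (eps / 4)%R ltac:(lra); exists N => n Hn;
        have := HN n Hn; rewrite /R_dist => /Rabs_def2; lra).
pose K := (\max_(p : (L * L)%type) Z.abs_nat (D p.1 p.2))%nat.
have HK : forall l l', (Z.abs (D l l') <= Z.of_nat K)%Z.
  move=> l l'; rewrite -Zabs2Nat.id_abs; apply: inj_le; apply/leP.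
  exact: (@leq_bigmax _ (fun p : (L * L)%type => Z.abs_nat (D p.1 p.2)) (l, l')).
have [M [HM HM0]] := archimed_cor1 (eps / (4 * INR K + 1)) ltac:(apply: Rdiv_lt_0_compat; [lra | have := pos_INR K; lra]).
pose T := (N + M)%nat.
have HT0 : (0 < T)%nat by rewrite /T; lia.
have HTK : (4 * INR K < eps * INR T)%R.
  have HMr : (0 < INR M)%R by apply: lt_0_INR.
  have HKr := pos_INR K.
  have E : (eps * INR M - (4 * INR K + 1) = (eps / (4 * INR K + 1) - / INR M) * ((4 * INR K + 1) * INR M))%R by field; lra.
  have : (0 < (eps / (4 * INR K + 1) - / INR M) * ((4 * INR K + 1) * INR M))%R.
    apply: Rmult_lt_0_compat; nra.
  have : (INR M <= INR T)%R by apply: le_INR; rewrite /T; lia.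
  nra.
pose Tp := (T + K)%nat.
pose Zp := Z.of_nat Tp.
have HZp : (0 < Zp)%Z by rewrite /Zp; lia.
pose succ0 l t := S0 l t && ~~ has_collision I D S0 l t.
pose S l t := ((t mod Zp <? Z.of_nat T)%Z && succ0 l (t mod Zp)%Z).
have Hkey : forall l' t d, S l' (t + d)%Z = true -> (Z.abs d <= Z.of_nat K)%Z ->
    (t mod Zp < Z.of_nat T)%Z -> S0 l' (t mod Zp + d)%Z = true.
  move=> l' t d; rewrite /S /succ0 => /andP [/Z.ltb_lt H1 /andP [H2 _]] Hd H3.
  rewrite -(@mod_shift Zp (Z.of_nat T) (Z.of_nat K) t d) //; rewrite /Zp /Tp; lia.
have Hcf : collision_free I D S.
  move=> l t Hs.
  have := Hs; rewrite /S /succ0 => /andP [/Z.ltb_lt H1 /andP [H2 /negP H3]].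
  apply/negbTE/negP => /existsP [phi /andP [Hphi /forallP Hall]].
  apply: H3; apply/existsP; exists phi; rewrite Hphi /=.
  apply/forallP => l'; apply/implyP => Hl'.
  have := Hall l'; move/implyP/(_ Hl') => H.
  apply: Hkey => //; exact: HK.
have HSper : forall l t, S l (t + Zp)%Z = S l t.
  move=> l t; rewrite /S.
  have -> : ((t + Zp) mod Zp = t mod Zp)%Z.
    by rewrite -{1}(Z.mul_1_l Zp) Z_mod_plus_full.
  done.
have Hc0T : forall l, (success_count I D S0 l T <= T)%nat.
  move=> l; rewrite sc_cnt; exact: cnt_le.
have Hcnt : forall l, cnt (fun t => S l (Z.of_nat t)) Tp = success_count I D S0 l T.
  move=> l; rewrite /Tp cnt_add sc_cnt.
  rewrite (@cnt_ext (fun t => S l (Z.of_nat (T + t))) (fun _ => false)); last first.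
    move=> t Ht; rewrite /S.
    rewrite Z.mod_small; last by rewrite /Zp /Tp; lia.
    have -> : (Z.of_nat (T + t) <? Z.of_nat T)%Z = false by apply/Z.ltb_ge; lia.
    done.
  rewrite cnt_false addn0.
  apply: cnt_ext => t Ht; rewrite /S.
  rewrite Z.mod_small; last by rewrite /Zp /Tp; lia.
  have -> : (Z.of_nat t <? Z.of_nat T)%Z = true by apply/Z.ltb_lt; lia.
  done.
exists S, Tp, (fun l => INR (success_count I D S0 l T) / INR Tp)%R.
split; first exact: Hcf.
split.
  split; first by rewrite /Tp; lia.
  move=> l t; rewrite /Zp HSper //.
split.
  move=> l e He; rewrite -Hcnt.
  have Hper' : forall t, S l (Z.of_nat (t + Tp)) = S l (Z.of_nat t).
    move=> t; have -> : Z.of_nat (t + Tp) = (Z.of_nat t + Zp)%Z by rewrite /Zp; lia.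
    exact: HSper.
  have [N' HN'] := @cnt_cv (fun t => S l (Z.of_nat t)) Tp ltac:(rewrite /Tp; lia) Hper' e He.
  exists N' => n Hn.
  have -> : avg_rate I D S l n = (INR (cnt (fun t => S l (Z.of_nat t)) n) / INR n)%R.
    rewrite /avg_rate sc_cnt.
    congr (INR _ / _)%R; apply: cnt_ext => t _.
    case E: (S l (Z.of_nat t)) => //=.
    by rewrite (Hcf _ _ E).
  exact: HN'.
move=> l.
have H1 := HN l T ltac:(rewrite /T; lia).
have H2 := Hle0 l.
have Hc := Hc0T l.
rewrite /avg_rate in H1.
set c := success_count I D S0 l T in H1 Hc *.
have HcT : (INR c <= INR T)%R by apply: le_INR; apply/leP.
have HTr : (0 < INR T)%R by apply: lt_0_INR; apply/ltP.
have HKr := pos_INR K.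
have HTp : INR Tp = (INR T + INR K)%R by rewrite /Tp -plus_INR.
rewrite HTp.
have H3 : ((Rv l - 3 * eps / 4) * INR T <= INR c)%R.
  have : (Rv l - 3 * eps / 4 <= INR c / INR T)%R by lra.
  move=> H; have := Rmult_le_compat_r (INR T) _ _ (Rlt_le _ _ HTr) H.
  have -> : (INR c / INR T * INR T = INR c)%R by field; lra.
  done.
have H4 : ((Rv l - eps) * (INR T + INR K) <= INR c)%R.
  have H5 : (Rv l - 3 * eps / 4 <= 1)%R by nra.
  case: (Rle_lt_dec (Rv l - eps) 0) => H6.
    have := pos_INR c. nra.
  have : ((Rv l - eps) * INR K <= INR K)%R by nra.
  nra.
apply: (Rmult_le_reg_r (INR T + INR K)); first lra.
have -> : (INR c / (INR T + INR K) * (INR T + INR K) = INR c)%R by field; lra.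
done.
Qed.
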